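(* Let $k\ge 1$ be an integer and $\sigma$ a permutation of $\mathbb{P}^1(\mathbb{F}_q)$. Let $\mathcal{A}_{\sigma,k}$ be the set of all tuples $(\mu; a_1,\dots,a_k)$ with $a_1,\dots,a_k\in\mathbb{F}_q$ and $\mu\in\mathbb{F}_q(x)$ of degree one such that $$\sigma = \mu(x)\circ x^{q-2}\circ(x-a_k)\circ x^{q-2}\circ(x-a_{k-1})\circ\cdots\circ x^{q-2}\circ(x-a_1),$$ and let $\mathcal{C}_{\sigma,k}$ be the set of all tuples $(\nu; b_1,\dots,b_k)$ with $b_1,\dots,b_k\in\mathbb{F}_q$ and $\nu\in\mathbb{F}_q(x)$ of degree one such that $$\sigma=\nu(x)\circ(b_1,\infty)\circ(b_2,\infty)\circ\cdots\circ(b_k,\infty).$$ Then the map $\mathcal{F}:\mathcal{A}_{\sigma,k}\to\mathcal{C}_{\sigma,k}$, $(\mu;a_1,\dots,a_k)\mapsto(\mu\circ\nu_0;\,F(a_1,\dots,a_k))$ where $\nu_0:=x^{-1}\circ(x-a_k)\circ x^{-1}\circ(x-a_{k-1})\circ\cdots\circ x^{-1}\circ(x-a_1)$, and the map $\mathcal{G}:\mathcal{C}_{\sigma,k}\to\mathcal{A}_{\sigma,k}$, $(\nu;b_1,\dots,b_k)\mapsto(\nu\circ\mu_0;\,a_1,\dots,a_k)$ where $(a_1,\dots,a_k):=G(b_1,\dots,b_k)$ and $\mu_0:=(x+a_1)\circ x^{-1}\circ(x+a_2)\circ x^{-1}\circ\cdots\circ(x+a_k)\circ x^{-1}$, are well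 defined and are mutually inverse bijections. In particular $|\mathcal{A}_{\sigma,k}|=|\mathcal{C}_{\sigma,k}|$.
   Context: Let $q>2$ be a prime power, $\mathbb{F}_q$ the field with $q$ elements, and $\mathbb{P}^1(\mathbb{F}_q)=\mathbb{F}_q\cup\{\infty\}$. A degree-one rational function $\mu(x)=(\alpha x+\beta)/(\gamma x+\delta)\in\mathbb{F}_q(x)$ ($\alpha\delta-\beta\gamma\neq0$) acts as a permutation of $\mathbb{P}^1(\mathbb{F}_q)$ with the usual conventions ($\mu(\infty)=\alpha/\gamma$, or $\infty$ if $\gamma=0$; $\mu(-\delta/\gamma)=\infty$ if $\gamma\ne0$); e.g. $x^{-1}$ swaps $0$ and $\infty$. The monomial $x^{q-2}$ acts on $\mathbb{P}^1(\mathbb{F}_q)$ by fixing $0$ and $\infty$ and sending $c\in\mathbb{F}_q^*$ to $c^{q-2}=c^{-1}$. For $b\in\mathbb{F}_q$, $(b,\infty)$ is the transposition of $\mathbb{P}^1(\mathbb{F}_q)$ swapping $b$ and $\infty$. Composition is $(f\circ g)(x)=f(g(x))$ and all identities are equalities of permutations of $\mathbb{P}^1(\mathbb{F}_q)$. For $c\in\mathbb{F}_q$, $c^{q-2}$ is the field element (so $0^{q-2}=0$). The map $F:\mathbb{F}_q^k\to\mathbb{F}_q^k$ sends $(a_1,\dots,a_k)$ to $(b_1,\dots,b_k)$ where $b_i:=c_{i,i}$, and for each $1\le i\le k$ the elements $c_{i,j}$ ($0\le j\le i$) are defined by $c_{i,0}:=0$ and $c_{i,j}:=c_{i,j-1}^{q-2}+a_{i-j+1}$.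 For $2\le\ell\le k$ let $\Phi_\ell:\mathbb{F}_q^\ell\to\mathbb{F}_q^{\ell-1}$ send $(e_1,\dots,e_\ell)$ to $((e_2-e_1)^{q-2},(e_3-e_1)^{q-2},\dots,(e_\ell-e_1)^{q-2})$. The map $G:\mathbb{F}_q^k\to\mathbb{F}_q^k$ sends $(b_1,\dots,b_k)$ to $(a_1,\dots,a_k)$ where $a_i$ is the first entry of $\Phi_{k-i+2}\circ\Phi_{k-i+3}\circ\cdots\circ\Phi_k(b_1,\dots,b_k)\in\mathbb{F}_q^{k-i+1}$ (for $i=1$ this composite is the identity, so $a_1=b_1$). *)

(* Defs.v *)
From HB Require Import structures.
From mathcomp Require Import all_boot all_order all_algebra perm.
Set Implicit Arguments. Unset Strict Implicit. Unset Printing Implicit Defensive.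
Import GRing.Theory.
Local Open Scope ring_scope.

Section Defs.
Variable F : finFieldType.

(* P^1(F_q) = option F, with None = infinity. *)
Definition P1 := option F.

Definition qm2 : nat := (#|F| - 2)%N.

(* A degree-one rational function (a x + b)/(c x + d) in F(x), with
   a d - b c <> 0, represented by its unique normalized coefficient quadruple
   ((a,b),(c,d)): c = 1 if c <> 0, and otherwise d = 1. *)
Definition mob_ok (m : (F * F) * (F * F)) : bool :=
  let a := m.1.1 in let b := m.1.2 in let c := m.2.1 in let d := m.2.2 in
  (a * d - b * c != 0) && (if c != 0 then c == 1 else d == 1).

Definition mob := {m : (F * F) * (F * F) | mob_ok m}.

Lemma mob_id_ok : mob_ok ((1, 0), (0, 1)).
Proof. by rewrite /mob_ok /= mulr1 mulr0 subr0 oner_neq0 eqxx eqxx. Qed.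

Definition mob_id : mob := exist _ ((1, 0), (0, 1)) mob_id_ok.

Definition mob_normalize (m : (F * F) * (F * F)) : (F * F) * (F * F) :=
  let a := m.1.1 in let b := m.1.2 in let c := m.2.1 in let d := m.2.2 in
  if c != 0 then ((a / c, b / c), (1, d / c)) else ((a / d, b / d), (0, 1)).

(* the degree-one function (a x + b)/(c x + d); only used with ad - bc <> 0 *)
Definition mob_of (a b c d : F) : mob := insubd mob_id (mob_normalize ((a, b), (c, d))).

Definition mob_comp (mu nu : mob) : mob :=
  let: ((a, b), (c, d)) := val mu in
  let: ((a', b'), (c', d')) := val nu in
  mob_of (a * a' + b * c') (a * b' + b * d') (c * a' + d * c') (c * b' + d * d').

Definition mob_inv : mob := mob_of 0 1 1 0.
Definition mob_trans (t : F) : mob := mob_of 1 t 0 1.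

Definition mob_act (mu : mob) (x : P1) : P1 :=
  let: ((a, b), (c, d)) := val mu in
  match x with
  | None => if c == 0 then None else Some (a / c)
  | Some e => if c * e + d == 0 then None else Some ((a * e + b) / (c * e + d))
  end.

Definition pw_act (x : P1) : P1 :=
  match x with None => None | Some e => Some (e ^+ qm2) end.
Definition sub_act (t : F) (x : P1) : P1 :=
  match x with None => None | Some e => Some (e - t) end.
Definition swap_act (b : F) (x : P1) : P1 :=
  match x with None => Some b | Some e => if e == b then None else Some e end.

(* x^{q-2} o (x - a_k) o ... o x^{q-2} o (x - a_1) *)
Definition chainA (a : seq F) (x : P1) : P1 :=
  foldl (fun y ai => pw_act (sub_act ai y)) x a.

(* (b_1,inf) o (b_2,inf) o ... o (b_k,inf) *)
Definition chainC (b : seq F) (x : P1) : P1 :=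
  foldr (fun bi y => swap_act bi y) x b.

Definition calA (k : nat) (sigma : {perm P1}) : {set mob * k.-tuple F} :=
  [set p : mob * k.-tuple F | [forall x, sigma x == mob_act p.1 (chainA p.2 x)]].

Definition calC (k : nat) (sigma : {perm P1}) : {set mob * k.-tuple F} :=
  [set p : mob * k.-tuple F | [forall x, sigma x == mob_act p.1 (chainC p.2 x)]].

(* nu_0 = x^{-1} o (x - a_k) o ... o x^{-1} o (x - a_1) *)
Definition nu0 (a : seq F) : mob :=
  foldl (fun m ai => mob_comp mob_inv (mob_comp (mob_trans (- ai)) m)) mob_id a.

(* mu_0 = (x + a_1) o x^{-1} o ... o (x + a_k) o x^{-1} *)
Definition mu0 (a : seq F) : mob :=
  foldr (fun ai m => mob_comp (mob_trans ai) (mob_comp mob_inv m)) mob_id a.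

(* the map F : b_i = c_{i,i}, c_{i,0} = 0, c_{i,j} = c_{i,j-1}^{q-2} + a_{i-j+1};
   here i is 0-based, so the paper's i is i.+1 *)
Definition Fmap (k : nat) (a : k.-tuple F) : k.-tuple F :=
  [tuple foldl (fun c aj => c ^+ qm2 + aj) 0 (rev (take i.+1 a)) | i < k].

Definition Phi (e : seq F) : seq F :=
  [seq (x - head 0 e) ^+ qm2 | x <- behead e].

(* the map G : a_i = first entry of Phi_{k-i+2} o ... o Phi_k (b); 0-based i *)
Definition Gmap (k : nat) (b : k.-tuple F) : k.-tuple F :=
  [tuple head 0 (iter i Phi b) | i < k].

Definition calF (k : nat) (p : mob * k.-tuple F) : mob * k.-tuple F :=
  (mob_comp p.1 (nu0 p.2), Fmap p.2).

Definition calG (k : nat) (p : mob * k.-tuple F) : mob * k.-tuple F :=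
  (mob_comp p.1 (mu0 (Gmap p.2)), Gmap p.2).

End Defs.

Arguments calA {F} k sigma.
Arguments calC {F} k sigma.
Arguments calF {F} k p.
Arguments calG {F} k p.
Arguments Fmap {F} k a.
Arguments Gmap {F} k b.

(* Main.v *)
Require Import Defs.
From HB Require Import structures.
From mathcomp Require Import all_boot all_order all_algebra perm.
From mathcomp Require Import ring finfield.
Set Implicit Arguments. Unset Strict Implicit. Unset Printing Implicit Defensive.
Import GRing.Theory.
Local Open Scope ring_scope.

Section Aux.
Variable F : finFieldType.
Hypothesis hq : (2 < #|F|)%N.

Definition quad := ((F * F) * (F * F))%type.

Definition act4 (m : quad) (x : P1 F) : P1 F :=
  let: ((a, b), (c, d)) := m in
  match x with
  | None => if c == 0 then None else Some (a / c)
  | Some e => if c * e + d == 0 then None else Some ((a * e + b) / (c * e + d))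
  end.

Lemma mob_actE (m : mob F) x : mob_act m x = act4 (val m) x.
Proof. by []. Qed.

Definition proj (u v : F) : P1 F := if v == 0 then None else Some (u / v).
Definition lift (x : P1 F) : F * F := if x is Some e then (e, 1) else (1, 0).

Lemma act4E a b c d x :
  act4 ((a, b), (c, d)) x =
  proj (a * (lift x).1 + b * (lift x).2) (c * (lift x).1 + d * (lift x).2).
Proof. by case: x => [e|] /=; rewrite /proj ?mulr1 ?mulr0 ?addr0. Qed.

Lemma proj_lin a b c d (u v : F) : (u != 0) || (v != 0) ->
  proj (a * u + b * v) (c * u + d * v) = act4 ((a, b), (c, d)) (proj u v).
Proof.
move=> uv; rewrite /proj /=.
have [v0|vn0] := eqVneq v 0.
  rewrite v0 eqxx orbF in uv; rewrite v0 /=.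
  rewrite !mulr0 !addr0 mulf_eq0 (negbTE uv) orbF.
  case: eqP => // /eqP c0; congr Some; field; exact/andP.
have -> : c * (u / v) + d = (c * u + d * v) / v by field.
rewrite mulf_eq0 invr_eq0 (negbTE vn0) orbF.
case: eqP => // /eqP cn; congr Some; field; exact/andP.
Qed.

Lemma proj_congr (u u' v v' : F) : u = u' -> v = v' -> proj u v = proj u' v'.
Proof. by move=> -> ->. Qed.

Definition det (m : quad) : F := let: ((a, b), (c, d)) := m in a * d - b * c.

Definition prod (m n : quad) : quad :=
  let: ((a, b), (c, d)) := m in
  let: ((a', b'), (c', d')) := n in
  ((a * a' + b * c', a * b' + b * d'), (c * a' + d * c', c * b' + d * d')).

Lemma lift_nz (n : quad) x : det n != 0 ->
  let: ((a', b'), (c', d')) := n in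
  (a' * (lift x).1 + b' * (lift x).2 != 0) || (c' * (lift x).1 + d' * (lift x).2 != 0).
Proof.
case: n => [[a' b'] [c' d']] /= dn; apply: contraNT dn; rewrite negb_or !negbK.
case: x => [e|] /=; rewrite ?mulr1 ?mulr0 ?addr0 => /andP[/eqP h1 /eqP h2]; apply/eqP.
  have -> : b' = - (a' * e) by apply/eqP; rewrite -addr_eq0 addrC h1.
  have -> : d' = - (c' * e) by apply/eqP; rewrite -addr_eq0 addrC h2.
  ring.
by rewrite h1 h2; ring.
Qed.

Lemma act4_prod m n x : det n != 0 ->
  act4 (prod m n) x = act4 m (act4 n x).
Proof.
move=> dn; have := lift_nz x dn.
case: m => [[a b] [c d]]; case: n dn => [[a' b'] [c' d']] dn nz.
rewrite [prod _ _]/= [LHS]act4E [act4 _ x]act4E -proj_lin //. apply: proj_congr; ring.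
Qed.

Lemma det_prod m n : det (prod m n) = det m * det n.
Proof. by case: m => [[a b] [c d]]; case: n => [[a' b'] [c' d']] /=; ring. Qed.

Lemma proj_scale s u v : s != 0 -> proj (s * u) (s * v) = proj u v.
Proof.
move=> sn; rewrite /proj mulf_eq0 (negbTE sn) /=; case: eqP => // /eqP vn.
congr Some; field; exact/andP.
Qed.

Lemma normE (a b c d : F) : mob_normalize ((a, b), (c, d)) =
  if c != 0 then ((a / c, b / c), (1, d / c)) else ((a / d, b / d), (0, 1)).
Proof. by []. Qed.

Lemma act4_norm m x : det m != 0 -> act4 (mob_normalize m) x = act4 m x.
Proof.
case: m => [[a b] [c d]] dn; rewrite /= in dn; rewrite normE.
case: ifP => [cn|/negbFE/eqP c0].
  rewrite [LHS]act4E [RHS]act4E -[RHS](proj_scale _ _ (invr_neq0 cn)). apply: proj_congr; field => //.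
have dn0 : d != 0 by apply: contraNneq dn => ->; rewrite c0 !mulr0 subrr.
rewrite [LHS]act4E [RHS]act4E -[RHS](proj_scale _ _ (invr_neq0 dn0)) c0; apply: proj_congr; field => //.
Qed.

Lemma ok_norm m : det m != 0 -> mob_ok (mob_normalize m).
Proof.
case: m => [[a b] [c d]] dn; rewrite /= in dn; rewrite normE /mob_ok.
case: ifP => [cn|/negbFE/eqP c0] /=.
  rewrite oner_neq0 eqxx andbT.
  have -> : a / c * (d / c) - b / c * 1 = (a * d - b * c) / (c * c) by field.
  by rewrite mulf_eq0 invr_eq0 negb_or dn /= mulf_eq0 negb_or cn.
have dn0 : d != 0 by apply: contraNneq dn => ->; rewrite c0 !mulr0 subrr.
rewrite eqxx eqxx andbT mulr1 mulr0 subr0 mulf_eq0 invr_eq0 negb_or dn0 andbT.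
by apply: contraNneq dn => ->; rewrite c0 mulr0 mul0r subrr.
Qed.

Lemma act_mob_of a b c d x : a * d - b * c != 0 ->
  mob_act (mob_of a b c d) x = act4 ((a, b), (c, d)) x.
Proof.
move=> dn; rewrite mob_actE /mob_of val_insubd.
by rewrite (ok_norm (m := ((a, b), (c, d)))) // act4_norm.
Qed.

Lemma det_mob (m : mob F) : det (val m) != 0.
Proof. by case: m => [[[a b] [c d]]] /= /andP[]. Qed.

Lemma act_comp (m n : mob F) x :
  mob_act (mob_comp m n) x = mob_act m (mob_act n x).
Proof.
rewrite [RHS]mob_actE [mob_act n x]mob_actE -act4_prod ?det_mob //.
have := det_prod (val m) (val n); have := det_mob m; have := det_mob n.
case: m => [[[a b] [c d]] Hm]; case: n => [[[a' b'] [c' d']] Hn] dn dm dp.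
apply: act_mob_of; move: dp; rewrite [prod _ _]/= => /= ->; exact: mulf_neq0.
Qed.

Lemma act_inj (m n : mob F) : (forall x, mob_act m x = mob_act n x) -> m = n.
Proof.
case: m => [[[a b] [c d]] Hm]; case: n => [[[a' b'] [c' d']] Hn] H.
apply: val_inj => /=.
have {}H : forall x, act4 ((a,b),(c,d)) x = act4 ((a',b'),(c',d')) x by exact: H.
move: Hm Hn => /andP[_ /= Hm] /andP[_ /= Hn].
have H0 := H None; rewrite /= in H0.
have [c0|cn] := eqVneq c 0.
  rewrite c0 eqxx in H0 Hm; move/eqP: Hm => d1.
  have [c0'|cn'] := eqVneq c' 0; last by rewrite (negbTE cn') in H0.
  rewrite c0' eqxx /= in Hn; move/eqP: Hn => d1'.
  have := H (Some 0); have := H (Some 1); rewrite /= c0 c0' d1 d1'.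
  rewrite !mul0r !add0r oner_eq0 !divr1 !mulr0 !add0r !mulr1 => -[e1] -[e2].
  have ea : a = a' by apply: (addIr b); rewrite e1 e2.
  by rewrite ea e2.
rewrite cn in Hm; move/eqP: Hm => c1.
have [c0'|cn'] := eqVneq c' 0; first by rewrite c0' eqxx (negbTE cn) in H0.
rewrite cn' in Hn; move/eqP: Hn => c1'.
rewrite c1 c1' oner_eq0 in H0; rewrite c1 c1' in H *.
move: H0; rewrite !divr1 => -[ea]; subst a'.
have Hd := H (Some (- d)); rewrite /= mul1r addNr eqxx in Hd.
have ed : d' = d.
  by move: Hd; case: eqP => // /eqP; rewrite addrC subr_eq0 => /eqP.
subst d'.
have := H (Some (1 - d)); rewrite /= !mul1r subrK oner_eq0 !divr1 => -[/addrI ->].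
by [].
Qed.


Definition iact (x : P1 F) : P1 F :=
  match x with None => Some 0 | Some e => if e == 0 then None else Some e^-1 end.
Definition tact (t : F) (x : P1 F) : P1 F :=
  match x with None => None | Some e => Some (e + t) end.

Lemma act_inv x : mob_act (mob_inv F) x = iact x.
Proof.
rewrite /mob_inv act_mob_of; last by rewrite mul0r sub0r mulr1 oppr_eq0 oner_eq0.
case: x => [e|] /=; last by rewrite oner_eq0 mul0r.
by rewrite mul1r addr0 mul0r add0r div1r.
Qed.

Lemma act_trans t x : mob_act (mob_trans t) x = tact t x.
Proof.
rewrite /mob_trans act_mob_of; last by rewrite mulr1 mulr0 subr0 oner_eq0.
case: x => [e|] /=; last by rewrite eqxx.
by rewrite mul0r add0r oner_eq0 mul1r divr1.
Qed.

Lemma act_id x : mob_act (mob_id F) x = x.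
Proof.
rewrite mob_actE; case: x => [e|] /=; last by rewrite eqxx.
by rewrite mul0r add0r oner_eq0 mul1r addr0 divr1.
Qed.

Lemma iactK x : iact (iact x) = x.
Proof.
case: x => [e|] /=; last by rewrite eqxx.
have [->|en] := eqVneq e 0; first by [].
by rewrite /= invr_eq0 (negbTE en) invrK.
Qed.

Lemma tactK t x : tact (- t) (tact t x) = x.
Proof. by case: x => [e|] //=; rewrite addrK. Qed.
Lemma tactK' t x : tact t (tact (- t) x) = x.
Proof. by case: x => [e|] //=; rewrite subrK. Qed.

Lemma pwE (x : F) : x ^+ qm2 F = x^-1.
Proof.
have [->|xn] := eqVneq x 0.
  by rewrite invr0 expr0n /qm2 subn_eq0 leqNgt hq.
apply: (mulIf xn); rewrite mulVf //; apply: (mulIf xn).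
rewrite -!exprSr mul1r /qm2.
have -> : (#|F| - 2).+2 = #|F| by rewrite -addn2 subnK // ltnW.
exact: expf_card.
Qed.

Lemma h_split (t : F) (x : P1 F) : pw_act (sub_act t x) = iact (tact (- t) (swap_act t x)).
Proof.
case: x => [e|] /=; last by rewrite addrN eqxx.
have [->|en] := eqVneq e t; first by rewrite /= subrr pwE invr0.
by rewrite /= pwE subr_eq0 (negbTE en).
Qed.

Lemma conj_swap (b t : F) (x : P1 F) :
  swap_act b (pw_act (sub_act t x)) = pw_act (sub_act t (swap_act (b ^+ qm2 F + t) x)).
Proof.
rewrite !pwE; case: x => [e|] /=; last by rewrite pwE addrK invrK.
rewrite pwE -(inj_eq invr_inj) invrK -subr_eq.
by case: eqP => //= _; rewrite pwE.
Qed.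

Definition gf (t y : F) := y ^+ qm2 F + t.

Definition Fs (a : seq F) : seq F :=
  [seq foldl (fun c aj => c ^+ qm2 F + aj) 0 (rev (take i.+1 a)) | i <- iota 0 (size a)].

Lemma Fs_cons t a : Fs (t :: a) = t :: map (gf t) (Fs a).
Proof.
rewrite /Fs /= take0 /= pwE invr0 add0r; congr (_ :: _).
rewrite (iotaDl 1 0) -!map_comp; apply: eq_map => i /=.
by rewrite rev_cons foldl_rcons.
Qed.

Definition Gs (b : seq F) : seq F :=
  [seq head 0 (iter i (@Phi F) b) | i <- iota 0 (size b)].

Lemma Gs_cons b0 bs : Gs (b0 :: bs) = b0 :: Gs (Phi (b0 :: bs)).
Proof.
rewrite /Gs /= size_map; congr (_ :: _).
rewrite (iotaDl 1 0) -!map_comp; apply: eq_map => i /=.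
by rewrite -iterSr.
Qed.

Lemma GF a : Gs (Fs a) = a.
Proof.
elim: a => [|t a IH] //; rewrite Fs_cons Gs_cons; congr (_ :: _).
rewrite /Phi /= -map_comp -[RHS]IH; congr Gs.
rewrite -[RHS]map_id; apply: eq_map => y /=.
by rewrite /gf addrK !pwE invrK.
Qed.

Lemma FG_n n b : size b = n -> Fs (Gs b) = b.
Proof.
elim: n b => [|n IH] [|b0 bs] //= [sz].
rewrite Gs_cons Fs_cons IH; last by rewrite size_map.
congr (_ :: _); rewrite /Phi /= -map_comp -[RHS]map_id; apply: eq_map => y /=.
by rewrite /gf !pwE invrK subrK.
Qed.

Lemma FG b : Fs (Gs b) = b.
Proof. exact: FG_n. Qed.

Definition Nu (a : seq F) (x : P1 F) :=
  foldl (fun y ai => iact (tact (- ai) y)) x a.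
Definition Mu (a : seq F) (x : P1 F) :=
  foldr (fun ai y => tact ai (iact y)) x a.

Lemma nu0_gen a (m : mob F) x :
  mob_act (foldl (fun m ai => mob_comp (mob_inv F) (mob_comp (mob_trans (- ai)) m)) m a) x
  = Nu a (mob_act m x).
Proof.
elim: a m x => [|t a IH] m x //.
by rewrite [LHS]/= IH act_comp act_inv act_comp act_trans.
Qed.

Lemma nu0E a x : mob_act (nu0 a) x = Nu a x.
Proof. by rewrite /nu0 nu0_gen act_id. Qed.

Lemma mu0E a x : mob_act (mu0 a) x = Mu a x.
Proof.
elim: a => [|t a IH]; first exact: act_id.
by rewrite [mu0 _]/= act_comp act_trans act_comp act_inv IH.
Qed.

Lemma NuMu a x : Nu a (Mu a x) = x.
Proof. by elim: a x => [|t a IH] x //=; rewrite tactK iactK IH. Qed.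

Lemma MuNu a x : Mu a (Nu a x) = x.
Proof. by elim: a x => [|t a IH] x //=; rewrite IH iactK tactK'. Qed.

Lemma chainA_cons (t : F) a (x : P1 F) : chainA (t :: a) x = chainA a (pw_act (sub_act t x)).
Proof. by []. Qed.
Lemma chainC_cons (b : F) s (x : P1 F) : chainC (b :: s) x = swap_act b (chainC s x).
Proof. by []. Qed.
Lemma Nu_cons t a x : Nu (t :: a) x = Nu a (iact (tact (- t) x)).
Proof. by []. Qed.

Lemma conj_chain (t : F) s (y : P1 F) :
  chainC s (pw_act (sub_act t y)) = pw_act (sub_act t (chainC (map (gf t) s) y)).
Proof.
elim: s => [|b s IH] //.
by rewrite [map _ (_ :: _)]/= !chainC_cons IH conj_swap.
Qed.

Lemma key a x : chainA a x = Nu a (chainC (Fs a) x).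
Proof.
elim: a x => [|t a IH] x //.
by rewrite chainA_cons IH Fs_cons chainC_cons Nu_cons -h_split conj_chain.
Qed.

Lemma FmapE k (a : k.-tuple F) : tval (Fmap k a) = Fs a.
Proof. by rewrite /Fmap /= /Fs size_tuple -val_enum_ord -map_comp. Qed.

Lemma GmapE k (b : k.-tuple F) : tval (Gmap k b) = Gs b.
Proof. by rewrite /Gmap /= /Gs size_tuple -val_enum_ord -map_comp. Qed.

End Aux.

Local Close Scope ring_scope.

Theorem theorem1 (F : finFieldType) (hq : 2 < #|F|) (k : nat) (hk : 1 <= k)
    (sigma : {perm P1 F}) :
  (forall p, p \in calA k sigma -> calF k p \in calC k sigma) /\
  (forall p, p \in calC k sigma -> calG k p \in calA k sigma) /\
  {in calA k sigma, cancel (calF k) (calG k)} /\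
  {in calC k sigma, cancel (calG k) (calF k)} /\
  #|calA k sigma| = #|calC k sigma|.
Proof.
have GF' : forall a : k.-tuple F, Gmap k (Fmap k a) = a.
  move=> a; apply: val_inj; change (tval (Gmap k (Fmap k a)) = tval a).
  by rewrite GmapE FmapE GF.
have FG' : forall b : k.-tuple F, Fmap k (Gmap k b) = b.
  move=> b; apply: val_inj; change (tval (Fmap k (Gmap k b)) = tval b).
  by rewrite FmapE GmapE FG.
have cFG : forall p : mob F * k.-tuple F, calG k (calF k p) = p.
  move=> p; case: p => m a; rewrite /calG /calF; cbn -[Gmap Fmap mob_comp nu0 mu0]; rewrite GF'; congr pair; apply: act_inj => x.
  by rewrite !act_comp mu0E nu0E NuMu.
have cGF : forall p : mob F * k.-tuple F, calF k (calG k p) = p.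
  move=> p; case: p => m b; rewrite /calG /calF; cbn -[Gmap Fmap mob_comp nu0 mu0]; rewrite FG'; congr pair; apply: act_inj => x.
  by rewrite !act_comp nu0E mu0E MuNu.
have AC : forall p : mob F * k.-tuple F, p \in calA k sigma -> calF k p \in calC k sigma.
  move=> p; case: p => m a; rewrite !inE => /forallP H; apply/forallP => x /=.
  by rewrite act_comp nu0E FmapE -key //; exact: H.
have CA : forall p : mob F * k.-tuple F, p \in calC k sigma -> calG k p \in calA k sigma.
  move=> p; case: p => m b; rewrite !inE => /forallP H; apply/forallP => x /=.
  by rewrite act_comp mu0E key // GmapE FG // MuNu //; exact: H.
split; first exact: AC.
split; first exact: CA.
split; first by move=> p _; exact: cFG.
split; first by move=> p _; exact: cGF.
apply/eqP; rewrite eqn_leq; apply/andP; split.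
  rewrite -(card_in_imset (f := calF k) (D := calA k sigma)); last first.
    by move=> p q _ _ /(congr1 (calG k)); rewrite !cFG.
  by apply: subset_leq_card; apply/subsetP => _ /imsetP[p pA ->]; exact: AC.
rewrite -(card_in_imset (f := calG k) (D := calC k sigma)); last first.
  by move=> p q _ _ /(congr1 (calF k)); rewrite !cGF.
by apply: subset_leq_card; apply/subsetP => _ /imsetP[p pA ->]; exact: CA.
Qed.
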